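(* Let $2\le k\le d$ and suppose that dimension $k$ is just rotating after step $N$. Then for all $i\ge N+1$: $\phi(i)\ge\phi(i+1)$, where $\phi(i)=\langle\lambda x^{(i)}_{k-1},x^{(i)}_k\rangle$.
   Context: Fix an integer $R\ge2$ and $\theta_g=\pi/R$. Polar rounding on $\mathbb{C}$: for $z=Ae^{i\theta}$, $[z]=[A]e^{i[\theta]}$, where $[A]$ is a fixed real rounding function of the modulus and $[\theta]$ is the multiple of $\theta_g$ closest to $\theta$ (deterministic tie-breaking). Let $\lambda\in\mathbb{C}$ be algebraic with $|\lambda|=1$, and let $M$ be the $d\times d$ Jordan block with eigenvalue $\lambda$ (so $\lambda$ on the diagonal and $1$ on the superdiagonal). The orbit is $x^{(0)}\in\mathbb{C}^d$ with rounded entries and $x^{(i+1)}=[Mx^{(i)}]$ (componentwise), i.e. $x^{(i+1)}_j=[\lambda x^{(i)}_j+x^{(i)}_{j+1}]$ for $j<d$ and $x^{(i+1)}_d=[\lambda x^{(i)}_d]$. Dimension $k$ is just rotating after position $N$ if $x^{(i+1)}_k=[\lambda x^{(i)}_k]$ for all $i\ge N$. For $a,b\in\mathbb{C}$ (viewed as vectors in $\mathbb{R}^2$), $\langle a,b\rangle\in[0,\pi]$ denotes the smallest angle between $a$ and $b$. *)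

(* Defs.v *)
From Stdlib Require Import Reals ZArith List.
From Coquelicot Require Import Coquelicot.
Open Scope R_scope.

(* lam is algebraic: root of a nonzero integer polynomial
   (coefficients listed from degree 0 upwards). *)
Fixpoint Zpoly_eval (p : list Z) (z : C) : C :=
  match p with
  | nil => RtoC 0
  | c :: q => Cplus (RtoC (IZR c)) (Cmult z (Zpoly_eval q z))
  end.

Definition algebraic (z : C) : Prop :=
  exists p : list Z, Exists (fun c => c <> 0%Z) p /\ Zpoly_eval p z = RtoC 0.

(* Principal argument in (-PI, PI]; convention arg 0 = 0. *)
Definition arg (z : C) : R :=
  if Req_EM_T (Cmod z) 0 then 0
  else if Rle_dec 0 (Im z) then acos (Re z / Cmod z)
       else - acos (Re z / Cmod z).

Definition angle_rounding (theta_g : R) (rang : R -> R) : Prop :=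
  forall theta : R,
    (exists m : Z, rang theta = IZR m * theta_g) /\
    (forall m : Z, Rabs (theta - rang theta) <= Rabs (theta - IZR m * theta_g)).

Definition polar_round (rnd rang : R -> R) (z : C) : C :=
  Cmult (RtoC (rnd (Cmod z))) (cos (rang (arg z)), sin (rang (arg z))).

(* smallest angle <a,b> in [0, PI] between a and b viewed in R^2 *)
Definition vangle (a b : C) : R :=
  acos ((Re a * Re b + Im a * Im b) / (Cmod a * Cmod b)).

(* Main.v *)
Require Import Defs.
From Stdlib Require Import Reals ZArith List.
From Coquelicot Require Import Coquelicot.
From Stdlib Require Import Lra Lia.
Open Scope R_scope.

Lemma Rabs_le_between x a : Rabs x <= a -> -a <= x <= a.
Proof. unfold Rabs; destruct (Rcase_abs x); lra. Qed.

Lemma sin_pos_inv u : -PI <= u <= PI -> 0 < sin u -> 0 < u.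
Proof.
  intros [H1 H2] Hs.
  destruct (Rtotal_order u 0) as [Hl|[He|Hg]]; auto.
  - destruct (Req_dec u (-PI)) as [E|E].
    + subst. rewrite sin_neg, sin_PI in Hs. lra.
    + assert (sin u < 0) by (apply sin_lt_0_var; lra). lra.
  - subst. rewrite sin_0 in Hs. lra.
Qed.

Lemma core_pos th p u c dl m j W r1 r2 :
  0 < th -> p = IZR m * th + dl -> Rabs dl <= th / 2 -> 0 < p < PI ->
  -PI <= u <= PI -> 0 <= W -> W * cos u = r1 * cos p + r2 ->
  W * sin u = r1 * sin p -> 0 < r1 -> 0 < r2 -> c = IZR j * th ->
  (forall j', Rabs (u - c) <= Rabs (u - IZR j' * th)) ->
  Rabs (c + dl) <= p.
Proof.
  intros Hth Hp Hdl Hpr Hu HW Hc Hs Hr1 Hr2 Hcj Hcl.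
  assert (Hsp : 0 < sin p) by (apply sin_gt_0; lra).
  assert (Hsu : 0 < sin u).
  { destruct (Rle_lt_dec (sin u) 0); [|auto].
    assert (W * sin u <= 0) by nra. nra. }
  assert (Hu0 : 0 < u) by (apply sin_pos_inv; lra).
  assert (Hupi : u < PI).
  { destruct (Req_dec u PI) as [E|E]; [subst; rewrite sin_PI in Hsu; lra|lra]. }
  assert (Hspu : W * sin (p - u) = r2 * sin p).
  { rewrite sin_minus. replace (W * (sin p * cos u - cos p * sin u))
      with (sin p * (W * cos u) - cos p * (W * sin u)) by ring.
    rewrite Hc, Hs. ring. }
  assert (Hpu : 0 < sin (p - u)).
  { destruct (Rle_lt_dec (sin (p-u)) 0); [|auto].
    assert (W * sin (p-u) <= 0) by nra. nra. }
  assert (Hup : u < p).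
  { destruct (Rle_lt_dec p u) as [H|H]; auto.
    destruct (Req_dec p u) as [E|E].
    - rewrite E in Hpu. replace (u - u) with 0 in Hpu by ring. rewrite sin_0 in Hpu. lra.
    - assert (sin (p - u) < 0) by (apply sin_lt_0_var; lra). lra. }
  assert (Hc0 : 0 <= c).
  { specialize (Hcl 0%Z). rewrite Rmult_0_l, Rminus_0_r in Hcl.
    rewrite (Rabs_right u) in Hcl by lra.
    apply Rabs_le_between in Hcl. lra. }
  assert (Hcm : c <= IZR m * th).
  { destruct (Z_le_gt_dec j m) as [Hjm|Hjm].
    - apply IZR_le in Hjm. subst c. nra.
    - assert (Hjm' : IZR j >= IZR m + 1).
      { rewrite <- plus_IZR. apply Rle_ge, IZR_le. lia. }
      exfalso. specialize (Hcl m).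
      assert (Hcth : c >= IZR m * th + th) by (subst c; nra).
      apply Rabs_le_between in Hdl.
      rewrite (Rabs_left (u - c)) in Hcl by lra.
      destruct (Rle_lt_dec (IZR m * th) u).
      + rewrite Rabs_right in Hcl by lra. lra.
      + rewrite Rabs_left in Hcl by lra. lra. }
  apply Rabs_le_between in Hdl.
  apply Rabs_le. split; [|lra].
  destruct (Rle_lt_dec 0 dl); [lra|].
  assert (Hm : (1 <= m)%Z).
  { destruct (Z_le_gt_dec 1 m); auto.
    assert (IZR m <= 0) by (apply IZR_le; lia). nra. }
  apply IZR_le in Hm. nra.
Qed.

Lemma core th p u c dl m j W r1 r2 :
  0 < th -> p = IZR m * th + dl -> Rabs dl <= th / 2 -> -PI < p < PI ->
  -PI <= u <= PI -> 0 <= W -> W * cos u = r1 * cos p + r2 ->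
  W * sin u = r1 * sin p -> 0 < r1 -> 0 < r2 -> c = IZR j * th ->
  (forall j', Rabs (u - c) <= Rabs (u - IZR j' * th)) ->
  Rabs (c + dl) <= Rabs p.
Proof.
  intros Hth Hp Hdl Hpr Hu HW Hc Hs Hr1 Hr2 Hcj Hcl.
  destruct (Rtotal_order p 0) as [Hl|[He|Hg]].
  - rewrite (Rabs_left p) by lra.
    replace (c + dl) with (- ((-c) + (-dl))) by ring. rewrite Rabs_Ropp.
    apply (core_pos th (-p) (-u) (-c) (-dl) (-m) (-j) W r1 r2); auto.
    + rewrite opp_IZR. lra.
    + rewrite Rabs_Ropp; auto.
    + lra.
    + lra.
    + rewrite cos_neg, cos_neg; auto.
    + rewrite sin_neg, sin_neg. lra.
    + rewrite opp_IZR. lra.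
    + intros j'. specialize (Hcl (-j')%Z). rewrite opp_IZR in Hcl.
      replace (-u - -c) with (-(u-c)) by ring. rewrite Rabs_Ropp.
      replace (-u - IZR j' * th) with (-(u - - IZR j' * th)) by ring.
      rewrite Rabs_Ropp. replace (- IZR j' * th) with (- IZR j' * th) by ring. lra.
  - rewrite He in Hp, Hs, Hc |- *. symmetry in Hp.
    assert (Hm : m = 0%Z).
    { apply Rabs_le_between in Hdl.
      destruct (Z.eq_dec m 0); auto.
      destruct (Z_le_gt_dec 1 m) as [H1|H1].
      + apply IZR_le in H1. nra.
      + assert (IZR m <= -1) by (apply IZR_le; lia). nra. }
    subst m. simpl in Hp. assert (dl = 0) by lra. subst dl.
    rewrite sin_0 in Hs. rewrite cos_0 in Hc.
    assert (HWp : 0 < W).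
    { destruct HW as [HW|HW]; auto. subst W. lra. }
    assert (Hsu : sin u = 0) by nra.
    assert (Hcu : 0 < cos u) by nra.
    assert (Hu0 : u = 0).
    { destruct (Rtotal_order u 0) as [Hl|[Hq|Hg]]; auto.
      - destruct (Req_dec u (-PI)) as [E|E].
        + subst. rewrite cos_neg, cos_PI in Hcu. lra.
        + assert (sin u < 0) by (apply sin_lt_0_var; lra). lra.
      - destruct (Req_dec u PI) as [E|E].
        + subst. rewrite cos_PI in Hcu. lra.
        + assert (0 < sin u) by (apply sin_gt_0; lra). lra. }
    subst u. specialize (Hcl 0%Z). rewrite Rmult_0_l in Hcl.
    rewrite Rminus_0_r, Rabs_R0 in Hcl.
    assert (Rabs (0 - c) = 0) by (pose proof (Rabs_pos (0 - c)); lra).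
    rewrite Rplus_0_r, Rabs_R0.
    replace c with (- (0 - c)) by ring. rewrite Rabs_Ropp. lra.
  - rewrite (Rabs_right p) by lra.
    apply (core_pos th p u c dl m j W r1 r2); auto. lra.
Qed.

Lemma cosZ x k : cos (x + IZR k * (2 * PI)) = cos x.
Proof.
  destruct (Z_le_gt_dec 0 k).
  - rewrite <- (Z2Nat.id k) by lia. rewrite <- INR_IZR_INZ.
    replace (x + INR (Z.to_nat k) * (2 * PI)) with (x + 2 * INR (Z.to_nat k) * PI) by ring.
    apply cos_period.
  - pose (n := Z.to_nat (- k)).
    assert (Hn : IZR k = - INR n).
    { unfold n. rewrite INR_IZR_INZ, Z2Nat.id by lia. rewrite opp_IZR. ring. }
    rewrite Hn. rewrite <- (cos_period (x + - INR n * (2 * PI)) n). f_equal. ring.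
Qed.

Lemma sinZ x k : sin (x + IZR k * (2 * PI)) = sin x.
Proof.
  destruct (Z_le_gt_dec 0 k).
  - rewrite <- (Z2Nat.id k) by lia. rewrite <- INR_IZR_INZ.
    replace (x + INR (Z.to_nat k) * (2 * PI)) with (x + 2 * INR (Z.to_nat k) * PI) by ring.
    apply sin_period.
  - pose (n := Z.to_nat (- k)).
    assert (Hn : IZR k = - INR n).
    { unfold n. rewrite INR_IZR_INZ, Z2Nat.id by lia. rewrite opp_IZR. ring. }
    rewrite Hn. rewrite <- (sin_period (x + - INR n * (2 * PI)) n). f_equal. ring.
Qed.

Lemma near_mult th t : 0 < th -> exists m : Z, Rabs (t - IZR m * th) <= th / 2.
Proof.
  intros Hth. destruct (archimed (t / th - 1/2)) as [H1 H2].
  exists (up (t / th - 1/2)). set (m := IZR (up (t / th - 1 / 2))) in *.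
  assert (Ht : t = (t / th) * th) by (field; lra).
  apply Rabs_le. rewrite Ht at 1 2. split; nra.
Qed.

Lemma reduce x : exists k : Z, -PI <= x + IZR k * (2 * PI) <= PI.
Proof.
  destruct (near_mult (2 * PI) x) as [m Hm]. { pose proof PI_RGT_0. lra. }
  exists (- m)%Z. rewrite opp_IZR.
  unfold Rabs in Hm. destruct (Rcase_abs _); lra.
Qed.

Lemma cos_abs x : cos (Rabs x) = cos x.
Proof. unfold Rabs; destruct (Rcase_abs x); [apply cos_neg|auto]. Qed.

Lemma acos_cos_abs x : Rabs x <= PI -> acos (cos x) = Rabs x.
Proof. intros H. rewrite <- cos_abs. apply acos_cos. split; [apply Rabs_pos|auto]. Qed.

Lemma polar_repr (z : C) : z = (Cmod z * cos (arg z), Cmod z * sin (arg z)).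
Proof.
  unfold arg. destruct (Req_EM_T (Cmod z) 0) as [H0|H0].
  - apply Cmod_eq_0 in H0. rewrite H0, Cmod_0. unfold RtoC. f_equal; ring.
  - destruct z as [a b]. unfold Re, Im in *. simpl fst in *. simpl snd in *.
    assert (HM : Cmod (a, b) = sqrt (a * a + b * b)).
    { unfold Cmod. simpl. f_equal. ring. }
    set (M := Cmod (a, b)) in *.
    assert (HM0 : 0 <= M) by (rewrite HM; apply sqrt_pos).
    assert (HM2 : M * M = a * a + b * b).
    { rewrite HM. apply sqrt_sqrt. nra. }
    assert (HMp : 0 < M) by lra.
    assert (Ht : -1 <= a / M <= 1).
    { split.
      - apply (Rmult_le_reg_r M); [lra|]. field_simplify; [|lra]. nra.
      - apply (Rmult_le_reg_r M); [lra|]. field_simplify; [|lra]. nra. }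
    assert (Hs : 0 <= sqrt (1 - (a / M)²)) by apply sqrt_pos.
    assert (Hs2 : sqrt (1 - (a / M)²) * sqrt (1 - (a / M)²) = 1 - (a/M)²).
    { apply sqrt_sqrt. unfold Rsqr. nra. }
    assert (Hb : (M * sqrt (1 - (a / M)²)) * (M * sqrt (1 - (a / M)²)) = b * b).
    { replace ((M * sqrt (1 - (a / M)²)) * (M * sqrt (1 - (a / M)²)))
        with (M * M * (sqrt (1 - (a / M)²) * sqrt (1 - (a / M)²))) by ring.
      rewrite Hs2. unfold Rsqr. field_simplify; [|lra]. nra. }
    assert (HMa : M * (a / M) = a) by (field; lra).
    set (s := M * sqrt (1 - (a / M)²)) in *.
    assert (Hs0 : 0 <= s) by (unfold s; nra).
    assert (Hsb : (s - b) * (s + b) = 0) by nra.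
    destruct (Rle_dec 0 b).
    + rewrite cos_acos, sin_acos by auto. f_equal; auto. fold s.
      apply Rmult_integral in Hsb. destruct Hsb; nra.
    + rewrite cos_neg, sin_neg, cos_acos, sin_acos by auto. f_equal; auto.
      replace (M * - sqrt (1 - (a / M)²)) with (- s) by (unfold s; ring).
      apply Rmult_integral in Hsb. destruct Hsb; nra.
Qed.

Lemma Cmod_polar r t : 0 <= r -> Cmod (r * cos t, r * sin t) = r.
Proof.
  intros Hr. unfold Cmod. simpl.
  replace ((r * cos t) * ((r * cos t) * 1) + (r * sin t) * ((r * sin t) * 1))
    with (r * r * ((sin t)² + (cos t)²)) by (unfold Rsqr; ring).
  rewrite sin2_cos2, Rmult_1_r. apply sqrt_square; auto.
Qed.

Lemma vangle_polar r1 r2 t1 t2 : 0 < r1 -> 0 < r2 ->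
  vangle (r1 * cos t1, r1 * sin t1) (r2 * cos t2, r2 * sin t2) = acos (cos (t1 - t2)).
Proof.
  intros H1 H2. unfold vangle. rewrite !Cmod_polar by lra. f_equal.
  unfold Re, Im; simpl. rewrite cos_minus. field. lra.
Qed.

Lemma mult_polar a r g : Cmult (cos a, sin a) (r * cos g, r * sin g) = (r * cos (a + g), r * sin (a + g)).
Proof.
  unfold Cmult; simpl. rewrite cos_plus, sin_plus. f_equal; ring.
Qed.

Lemma polar_round_eq rnd rang w :
  polar_round rnd rang w = (rnd (Cmod w) * cos (rang (arg w)), rnd (Cmod w) * sin (rang (arg w))).
Proof. unfold polar_round, Cmult; simpl. f_equal; ring. Qed.

Lemma rot_cos a b X : cos a = cos b -> sin a = sin b -> cos (a + X) = cos (b + X).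
Proof. intros H1 H2. rewrite !cos_plus, H1, H2. auto. Qed.
Lemma rot_sin a b X : cos a = cos b -> sin a = sin b -> sin (a + X) = sin (b + X).
Proof. intros H1 H2. rewrite !sin_plus, H1, H2. auto. Qed.

Lemma main_real th Rz rang al ga be psi om W r1 r2 :
  0 < th -> PI = IZR Rz * th -> angle_rounding th rang ->
  (exists a, ga = IZR a * th) -> (exists b, be = IZR b * th) ->
  cos psi = cos (al + be) -> sin psi = sin (al + be) ->
  0 <= W -> W * cos om = r1 * cos (al + ga) + r2 * cos be ->
  W * sin om = r1 * sin (al + ga) + r2 * sin be -> 0 < r1 -> 0 < r2 ->
  acos (cos (al + ga - be)) >= acos (cos (al + rang om - rang psi)).
Proof.
  intros Hth HPI Hrg [a Ha] [b Hb] Hcp Hsp HW Hc Hs Hr1 Hr2.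
  assert (H2PI : 2 * PI = IZR (2 * Rz) * th) by (rewrite mult_IZR, HPI; ring).
  rewrite mult_IZR in H2PI.
  destruct (reduce (psi + ga - 2 * be)) as [k' Hk'].
  set (p := psi + ga - 2 * be + IZR k' * (2 * PI)) in *.
  assert (Hcosp : cos (al + ga - be) = cos p).
  { unfold p. rewrite cosZ.
    replace (al + ga - be) with ((al + be) + (ga - 2 * be)) by ring.
    replace (psi + ga - 2 * be) with (psi + (ga - 2 * be)) by ring.
    apply rot_cos; auto. }
  assert (Hsinp : sin (al + ga - be) = sin p).
  { unfold p. rewrite sinZ.
    replace (al + ga - be) with ((al + be) + (ga - 2 * be)) by ring.
    replace (psi + ga - 2 * be) with (psi + (ga - 2 * be)) by ring.
    apply rot_sin; auto. }
  rewrite Hcosp.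
  destruct (Req_dec (Rabs p) PI) as [Hpi|Hpi].
  { rewrite acos_cos_abs by lra. rewrite Hpi.
    pose proof (acos_bound (cos (al + rang om - rang psi))). lra. }
  assert (Hpr : -PI < p < PI).
  { unfold Rabs in Hpi; destruct (Rcase_abs p); lra. }
  destruct (Hrg psi) as [[e He] Hpsicl].
  destruct (Hrg om) as [[f Hf] Homcl].
  set (dl := psi - rang psi).
  assert (Hdl : Rabs dl <= th / 2).
  { destruct (near_mult th psi Hth) as [m0 Hm0]. unfold dl.
    specialize (Hpsicl m0). lra. }
  destruct (reduce (om - be)) as [k Hk].
  set (u := om - be + IZR k * (2 * PI)) in *.
  set (c := rang om - be + IZR k * (2 * PI)).
  assert (Hpm : p = IZR (e + a - 2 * b + 2 * Rz * k') * th + dl).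
  { unfold p, dl. rewrite He, Ha, Hb.
    repeat rewrite ?plus_IZR, ?minus_IZR, ?mult_IZR.
    rewrite H2PI.
    ring. }
  assert (Hcj : c = IZR (f - b + 2 * Rz * k) * th).
  { unfold c. rewrite Hf, Hb. repeat rewrite ?plus_IZR, ?minus_IZR, ?mult_IZR.
    rewrite H2PI.
    ring. }
  assert (Hcl : forall j', Rabs (u - c) <= Rabs (u - IZR j' * th)).
  { intros j'. specialize (Homcl (j' + b - 2 * Rz * k)%Z).
    replace (u - c) with (om - rang om) by (unfold u, c; ring).
    replace (u - IZR j' * th) with (om - IZR (j' + b - 2 * Rz * k) * th); auto.
    unfold u. rewrite Hb. repeat rewrite ?plus_IZR, ?minus_IZR, ?mult_IZR.
    rewrite H2PI.
    ring. }
  assert (Hcu : W * cos u = r1 * cos p + r2).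
  { unfold u. rewrite cosZ, cos_minus, <- Hcosp, cos_minus.
    replace (W * (cos om * cos be + sin om * sin be)) with
      ((W * cos om) * cos be + (W * sin om) * sin be) by ring.
    rewrite Hc, Hs. pose proof (sin2_cos2 be). unfold Rsqr in *. nra. }
  assert (Hsu : W * sin u = r1 * sin p).
  { unfold u. rewrite sinZ, sin_minus, <- Hsinp, sin_minus.
    replace (W * (sin om * cos be - cos om * sin be)) with
      ((W * sin om) * cos be - (W * cos om) * sin be) by ring.
    rewrite Hc, Hs. ring. }
  assert (Hcore : Rabs (c + dl) <= Rabs p)
    by (apply (core th p u c dl _ _ W r1 r2 Hth Hpm Hdl Hpr Hk HW Hcu Hsu Hr1 Hr2 Hcj Hcl)).
  assert (Hrhs : cos (al + rang om - rang psi) = cos (c + dl)).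
  { assert (E1 : cos (al + be - psi) = cos 0).
    { rewrite cos_minus, Hcp, Hsp, cos_0. pose proof (sin2_cos2 (al + be)). unfold Rsqr in *. lra. }
    assert (E2 : sin (al + be - psi) = sin 0).
    { rewrite sin_minus, Hcp, Hsp, sin_0. ring. }
    replace (al + rang om - rang psi) with ((al + be - psi) + (rang om - be + dl)) by (unfold dl; ring).
    replace (c + dl) with ((rang om - be + dl) + IZR k * (2 * PI)) by (unfold c; ring).
    rewrite cosZ, (rot_cos _ _ _ E1 E2). f_equal. ring. }
  assert (Hap : Rabs p <= PI) by (apply Rabs_le; lra).
  rewrite Hrhs. rewrite !acos_cos_abs by lra. lra.
Qed.

Lemma pos_of_nz r t : (r * cos t, r * sin t) <> RtoC 0 -> 0 <= r -> 0 < r.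
Proof.
  intros H H0. destruct H0 as [H0|H0]; auto. subst r. exfalso. apply H.
  unfold RtoC. f_equal; ring.
Qed.

Theorem lemma13 (Rg : nat) (rnd rang : R -> R) (lam : C) (d k N : nat)
    (x : nat -> nat -> C) :
  (2 <= Rg)%nat ->
  (forall A : R, 0 <= A -> 0 <= rnd A) ->
  angle_rounding (PI / INR Rg) rang ->
  algebraic lam -> Cmod lam = 1 ->
  (2 <= k)%nat -> (k <= d)%nat ->
  (* initial vector has rounded entries *)
  (forall j : nat, (1 <= j <= d)%nat -> exists z : C, x 0%nat j = polar_round rnd rang z) ->
  (* orbit under the rounded Jordan block *)
  (forall (i j : nat), (1 <= j < d)%nat ->
     x (S i) j = polar_round rnd rang (Cplus (Cmult lam (x i j)) (x i (S j)))) ->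
  (forall i : nat, x (S i) d = polar_round rnd rang (Cmult lam (x i d))) ->
  (* dimension k is just rotating after position N *)
  (forall i : nat, (N <= i)%nat -> x (S i) k = polar_round rnd rang (Cmult lam (x i k))) ->
  (* phi(i) is defined: the relevant entries are nonzero *)
  (forall i : nat, (N + 1 <= i)%nat -> x i (k - 1)%nat <> RtoC 0 /\ x i k <> RtoC 0) ->
  forall i : nat, (N + 1 <= i)%nat ->
    vangle (Cmult lam (x i (k - 1)%nat)) (x i k) >=
    vangle (Cmult lam (x (S i) (k - 1)%nat)) (x (S i) k).
Proof.
  intros HRg Hrnd Hang Halg Hlam Hk2 Hkd Hx0 Hstep Hlast Hrot Hnz i Hi.
  destruct i as [|i0]; [lia|].
  set (th := PI / INR Rg) in *.
  assert (HRgp : 0 < INR Rg) by (apply lt_0_INR; lia).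
  assert (Hth : 0 < th) by (unfold th; apply Rdiv_lt_0_compat; [apply PI_RGT_0|auto]).
  assert (HPI : PI = IZR (Z.of_nat Rg) * th).
  { unfold th. rewrite <- INR_IZR_INZ. field. lra. }
  assert (Hkk : S (k - 1) = k) by lia.
  assert (Hy : x (S i0) (k - 1)%nat =
     polar_round rnd rang (Cplus (Cmult lam (x i0 (k - 1)%nat)) (x i0 k))).
  { rewrite Hstep by lia. rewrite Hkk. auto. }
  assert (Hz : x (S i0) k = polar_round rnd rang (Cmult lam (x i0 k))) by (apply Hrot; lia).
  assert (Hy' : x (S (S i0)) (k - 1)%nat =
     polar_round rnd rang (Cplus (Cmult lam (x (S i0) (k - 1)%nat)) (x (S i0) k))).
  { rewrite Hstep by lia. rewrite Hkk. auto. }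
  assert (Hz' : x (S (S i0)) k = polar_round rnd rang (Cmult lam (x (S i0) k))) by (apply Hrot; lia).
  destruct (Hnz (S i0)) as [Hny Hnz1]; [lia|].
  destruct (Hnz (S (S i0))) as [Hny' Hnz'1]; [lia|].
  rewrite Hy', Hz'. rewrite Hy' in Hny'. rewrite Hz' in Hnz'1. clear Hy' Hz'.
  rewrite polar_round_eq in Hy, Hz.
  set (Y0 := Cplus (Cmult lam (x i0 (k - 1)%nat)) (x i0 k)) in *.
  set (Z0 := Cmult lam (x i0 k)) in *.
  set (r1 := rnd (Cmod Y0)) in *. set (ga := rang (arg Y0)) in *.
  set (r2 := rnd (Cmod Z0)) in *. set (be := rang (arg Z0)) in *.
  rewrite Hy in Hny, Hny' |- *. rewrite Hz in Hnz1, Hny', Hnz'1 |- *.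
  assert (Hr1 : 0 < r1) by (apply (pos_of_nz _ ga); auto; apply Hrnd, Cmod_ge_0).
  assert (Hr2 : 0 < r2) by (apply (pos_of_nz _ be); auto; apply Hrnd, Cmod_ge_0).
  set (al := arg lam).
  assert (Hl : lam = (cos al, sin al)).
  { rewrite (polar_repr lam) at 1. rewrite Hlam. unfold al. f_equal; ring. }
  assert (HLy : Cmult lam (r1 * cos ga, r1 * sin ga) = (r1 * cos (al + ga), r1 * sin (al + ga)))
    by (rewrite Hl; apply mult_polar).
  assert (HLz : Cmult lam (r2 * cos be, r2 * sin be) = (r2 * cos (al + be), r2 * sin (al + be)))
    by (rewrite Hl; apply mult_polar).
  rewrite HLy, HLz. rewrite HLy in Hny'. rewrite HLz in Hnz'1.
  rewrite !polar_round_eq. rewrite !polar_round_eq in Hny', Hnz'1.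
  set (V := (r2 * cos (al + be), r2 * sin (al + be))) in *.
  set (Wv := Cplus (r1 * cos (al + ga), r1 * sin (al + ga)) (r2 * cos be, r2 * sin be)) in *.
  assert (Hr1' : 0 < rnd (Cmod Wv)) by (eapply pos_of_nz; eauto; apply Hrnd, Cmod_ge_0).
  assert (Hr2' : 0 < rnd (Cmod V)) by (eapply pos_of_nz; eauto; apply Hrnd, Cmod_ge_0).
  rewrite Hl. rewrite mult_polar.
  rewrite !vangle_polar by auto.
  assert (HV : Cmod V = r2) by (apply Cmod_polar; lra).
  pose proof (polar_repr V) as HVr. rewrite HV in HVr.
  pose proof (polar_repr Wv) as HWr.
  assert (HVc : cos (arg V) = cos (al + be)).
  { apply (f_equal fst) in HVr. simpl in HVr.
    apply (Rmult_eq_reg_l r2); [|lra]. unfold V in *. simpl in HVr. lra. }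
  assert (HVs : sin (arg V) = sin (al + be)).
  { apply (f_equal snd) in HVr. simpl in HVr.
    apply (Rmult_eq_reg_l r2); [|lra]. unfold V in *. simpl in HVr. lra. }
  assert (HWc : Cmod Wv * cos (arg Wv) = r1 * cos (al + ga) + r2 * cos be).
  { apply (f_equal fst) in HWr. simpl in HWr. rewrite <- HWr. unfold Wv. simpl. auto. }
  assert (HWs : Cmod Wv * sin (arg Wv) = r1 * sin (al + ga) + r2 * sin be).
  { apply (f_equal snd) in HWr. simpl in HWr. rewrite <- HWr. unfold Wv. simpl. auto. }
  apply (main_real th (Z.of_nat Rg) rang al ga be (arg V) (arg Wv) (Cmod Wv) r1 r2); auto.
  - destruct (Hang (arg Y0)) as [[a Ha] _]. exists a. auto.
  - destruct (Hang (arg Z0)) as [[b Hb] _]. exists b. auto.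
  - apply Cmod_ge_0.
Qed.
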